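(* Let $k$ be a field and let $M$ be a finitely generated, commutative, cancellative monoid whose group completion $M^{\mathrm{gp}}$ is torsion-free, and let $X=\operatorname{Spec} k[M]$. Let $M^\times\subseteq M$ be the group of units of $M$ and $Y=\operatorname{Spec} k[M^\times]$. Let $\pi\colon X\to Y$ be the morphism induced by the inclusion $M^\times\hookrightarrow M$, and let $i\colon Y\to X$ be the morphism induced by the monoid map $M\to M^\times\cup\{0\}$ that is the identity on $M^\times$ and sends $M\setminus M^\times$ to $0$. Then $i$ and $\pi$ are mutually inverse naive $\mathbf A^1$-homotopy equivalences: $\pi\circ i=\mathrm{id}_Y$, and $i\circ\pi$ is naively $\mathbf A^1$-homotopic to $\mathrm{id}_X$.
   Context: Two morphisms $f,g\colon X\to X'$ of $k$-schemes are naively $\mathbf A^1$-homotopic if they are related by the equivalence relation generated by: $f\sim g$ whenever there is a morphism $h\colon \mathbf A^1_k\times_k X\to X'$ with $h|_{\{0\}\times X}=f$ and $h|_{\{1\}\times X}=g$. Such an $X$ is called a split affine toric variety; $i$ embeds $Y$ as the unique closed torus orbit of $X$. *)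

(* Defs.v *)
From HB Require Import structures.
From mathcomp Require Import all_boot all_order all_algebra.
From mathcomp Require Import finmap.
From mathcomp Require Import boolp.
From Stdlib Require Import Relations.
Set Implicit Arguments. Unset Strict Implicit. Unset Printing Implicit Defensive.
Import GRing.Theory.
Local Open Scope ring_scope.


(* Monoid algebras k[T] of a monoid (T, op, e): finitely supported functions *)
Section MonoidAlgebra.
Variables (k : fieldType) (T : choiceType).

Local Notation MA := {fsfun T -> k with 0%R}.

Definition ma_add (f g : MA) : MA :=
  [fsfun x in (finsupp f `|` finsupp g)%fset => f x + g x].

Definition ma_scale (c : k) (f : MA) : MA :=
  [fsfun x in finsupp f => c * f x].

Definition ma_basis (t : T) : MA := [fsfun x in [fset t]%fset => 1].

Definition ma_mul (op : T -> T -> T) (f g : MA) : MA :=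
  [fsfun x in [fset op a b | a in finsupp f, b in finsupp g]%fset =>
     \sum_(a <- finsupp f) \sum_(b <- finsupp g | op a b == x) f a * g b].

End MonoidAlgebra.

Notation MA k T := {fsfun T -> k with 0%R}.

Definition is_kalg_hom (k : fieldType) (T U : choiceType)
    (opT : T -> T -> T) (eT : T) (opU : U -> U -> U) (eU : U)
    (phi : MA k T -> MA k U) : Prop :=
  [/\ forall f g, phi (ma_add f g) = ma_add (phi f) (phi g),
      forall c f, phi (ma_scale c f) = ma_scale c (phi f),
      forall f g, phi (ma_mul opT f g) = ma_mul opU (phi f) (phi g)
    & phi (ma_basis k eT) = ma_basis k eU].

Definition ma_map (k : fieldType) (T U : choiceType) (phi : T -> U)
    (f : MA k T) : MA k U :=
  [fsfun u in [fset phi t | t in finsupp f]%fset =>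
     \sum_(t <- finsupp f | phi t == u) f t].

(* k[M][t] = k[N x M] (k[t] = k[N]) and evaluation at t = c.                *)
Definition A1op (T : choiceType) (op : T -> T -> T) (p q : nat * T) : nat * T :=
  ((p.1 + q.1)%N, op p.2 q.2).

Definition ma_ev (k : fieldType) (T : choiceType) (c : k)
    (f : MA k (nat * T)) : MA k T :=
  [fsfun m in [fset p.2 | p in finsupp f]%fset =>
     \sum_(p <- finsupp f | p.2 == m) f p * c ^+ p.1].

(* Elementary naive A^1-homotopy between two endomorphisms phi, psi of the   *)
(* affine k-scheme Spec k[T], in terms of the corresponding k-algebra maps:  *)
(* a k-algebra map h : k[T] -> k[T][t] with h(t=0) = phi and h(t=1) = psi.   *)
Definition elem_A1_htpy (k : fieldType) (T : choiceType) (op : T -> T -> T)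
    (e : T) (phi psi : MA k T -> MA k T) : Prop :=
  exists h : MA k T -> MA k (nat * T),
    [/\ is_kalg_hom op e (A1op op) (0%N, e) h,
        forall f, ma_ev 0 (h f) = phi f
      & forall f, ma_ev 1 (h f) = psi f].

Definition naive_A1_htpy (k : fieldType) (T : choiceType) (op : T -> T -> T)
    (e : T) : relation (MA k T -> MA k T) :=
  clos_refl_sym_trans _ (@elem_A1_htpy k T op e).

Definition cancellative (M : Type) (op : M -> M -> M) : Prop :=
  forall a b c, op a c = op b c -> a = b.

Definition fin_generated (M : eqType) (e : M) (op : M -> M -> M) : Prop :=
  exists s : seq M, forall m : M, exists n : seq M,
    (forall x, x \in n -> x \in s) /\ m = \big[op/e]_(x <- n) x.

(* The group completion M^gp of a cancellative commutative monoid: pairs     *)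
(* (a, b) (standing for a - b) modulo (a,b) ~ (c,d) iff a + d = b + c.       *)
Definition gp_rel (M : Type) (op : M -> M -> M) (p q : M * M) : Prop :=
  op p.1 q.2 = op p.2 q.1.

Definition mpow (M : Type) (e : M) (op : M -> M -> M) (a : M) (n : nat) : M :=
  \big[op/e]_(i < n) a.

Definition gp_torsion_free (M : Type) (e : M) (op : M -> M -> M) : Prop :=
  forall (a b : M) (n : nat), (0 < n)%N ->
    gp_rel op (mpow e op a n, mpow e op b n) (e, e) -> gp_rel op (a, b) (e, e).

Section Units.
Variables (M : choiceType) (e : M) (op : Monoid.com_law e).

Definition is_unitm (x : M) : bool := `[< exists y, op x y = e >].

Definition Mx := {x : M | is_unitm x}.

Lemma unitm_op (x y : Mx) : is_unitm (op (val x) (val y)).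
Proof.
move: x y => [x Hx0] [y Hy0] /=.
move/asboolP: Hx0 => [x' Hx]; move/asboolP: Hy0 => [y' Hy].
apply/asboolP; exists (op x' y').
have -> : op (op x y) (op x' y') = op (op x x') (op y y') by rewrite Monoid.mulmACA.
by rewrite Hx Hy Monoid.mul1m.
Qed.

Lemma unitm_e : is_unitm e.
Proof. by apply/asboolP; exists e; rewrite Monoid.mul1m. Qed.

Definition Mx_op (x y : Mx) : Mx := exist _ (op (val x) (val y)) (unitm_op x y).
Definition Mx_e : Mx := exist _ e unitm_e.

(* pi : X -> Y corresponds to pi^* : k[M^x] -> k[M] induced by inclusion *)
Definition pi_star (k : fieldType) (f : MA k Mx) : MA k M := ma_map val f.

(* i : Y -> X corresponds to i^* : k[M] -> k[M^x] induced by the monoid map *)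
(* M -> M^x u {0} (identity on units, non-units to 0): e_m |-> e_m if m is a *)
(* unit, e_m |-> 0 otherwise.                                               *)
Definition i_star (k : fieldType) (f : MA k M) : MA k Mx :=
  [fsfun u in [fset u | u in pmap insub (finsupp f : seq M)]%fset => f (val u)].

End Units.

(* Main.v *)
Require Import Defs.
From HB Require Import structures.
From mathcomp Require Import all_boot all_order all_algebra.
From mathcomp Require Import finmap.
From mathcomp Require Import boolp zify ring lra.
From Stdlib Require Import Relations.
Set Implicit Arguments. Unset Strict Implicit. Unset Printing Implicit Defensive.
Import Order.TTheory GRing.Theory Num.Theory.


Section FsAlg.
Local Open Scope ring_scope.

Variable k : fieldType.

Lemma supp0 (T : choiceType) (f : MA k T) x : x \notin finsupp f -> f x = 0.
Proof. by rewrite mem_finsupp negbK => /eqP. Qed.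

Lemma ma_addE (T : choiceType) (f g : MA k T) x : ma_add f g x = f x + g x.
Proof.
rewrite /ma_add fsfunE in_fsetU; case: ifP => // /norP[/supp0 -> /supp0 ->].
by rewrite addr0.
Qed.

Lemma ma_scaleE (T : choiceType) c (f : MA k T) x : ma_scale c f x = c * f x.
Proof. by rewrite /ma_scale fsfunE; case: ifP => // /negbT /supp0 ->; rewrite mulr0. Qed.

Lemma ma_basisE (T : choiceType) (t x : T) : ma_basis k t x = (x == t)%:R.
Proof. by rewrite /ma_basis fsfunE in_fset1; case: eqP. Qed.

Lemma ma_mapE (T U : choiceType) (phi : T -> U) (f : MA k T) u :
  ma_map phi f u = \sum_(t <- finsupp f | phi t == u) f t.
Proof.
rewrite /ma_map fsfunE; case: ifP => // /negbT Hu.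
rewrite big_seq_cond big1 // => t /andP[Ht /eqP Hp].
by move: Hu; rewrite -Hp in_imfset.
Qed.

Lemma ma_mulE (T : choiceType) op (f g : MA k T) x :
  ma_mul op f g x = \sum_(a <- finsupp f) \sum_(b <- finsupp g | op a b == x) f a * g b.
Proof.
rewrite /ma_mul fsfunE; case: ifP => // /negbT Hu.
rewrite big_seq big1 // => a Ha; rewrite big_seq_cond big1 // => b /andP[Hb /eqP Hp].
by move: Hu; rewrite -Hp in_imfset2.
Qed.

Lemma ma_evE (T : choiceType) (c : k) (f : MA k (nat * T)) m :
  ma_ev c f m = \sum_(p <- finsupp f | p.2 == m) f p * c ^+ p.1.
Proof.
rewrite /ma_ev fsfunE; case: ifP => // /negbT Hu.
rewrite big_seq_cond big1 // => p /andP[Hp /eqP Hq].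
by move: Hu; rewrite -Hq in_imfset.
Qed.

Lemma sum_supp (T : choiceType) (f : MA k T) (S : {fset T}) (F : T -> k) :
  (finsupp f `<=` S)%fset -> (forall t, f t = 0 -> F t = 0) ->
  \sum_(t <- finsupp f) F t = \sum_(t <- S) F t.
Proof.
move=> HS HF; apply: big_fset_incl => // x _ /supp0; exact: HF.
Qed.

Lemma sum_pred1 (T : choiceType) (f : MA k T) (G : T -> k) m :
  \sum_(t <- finsupp f | t == m) f t * G t = f m * G m.
Proof.
rewrite -big_filter; case: (boolP (m \in finsupp f)) => Hm.
  by rewrite filter_pred1_uniq ?fset_uniq // big_seq1.
rewrite supp0 // mul0r big1_seq // => t /andP[_]; rewrite mem_filter => /andP[/eqP -> Ht].
by rewrite Ht in Hm.
Qed.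

Lemma supp_map (T U : choiceType) (phi : T -> U) (f : MA k T) :
  (finsupp (ma_map phi f) `<=` [fset phi t | t in finsupp f])%fset.
Proof.
apply/fsubsetP => u; rewrite mem_finsupp ma_mapE => H.
apply: contraR H => Hu; rewrite big_seq_cond big1 // => t /andP[Ht /eqP Hp].
by move: Hu; rewrite -Hp in_imfset.
Qed.

End FsAlg.

Section FsAlg2.
Local Open Scope ring_scope.
Variable k : fieldType.

Lemma sum_pred1' (T : choiceType) (f : MA k T) m :
  \sum_(t <- finsupp f | t == m) f t = f m.
Proof.
rewrite -[RHS]mulr1 -(sum_pred1 f (fun=> 1)); apply: eq_bigr => *; by rewrite mulr1.
Qed.

Lemma sum_imfset (T U : choiceType) (phi : T -> U) (S : {fset T}) (F : U -> k) :
  injective phi ->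
  \sum_(u <- [fset phi t | t in S]%fset) F u = \sum_(t <- S) F (phi t).
Proof. by move=> Hi; rewrite big_imfset //; move=> x y _ _; apply: Hi. Qed.

Variables (M : choiceType) (e : M) (op : Monoid.com_law e).

Lemma i_starE (g : MA k M) u : i_star op g u = g (val u).
Proof.
rewrite /i_star fsfunE; case: ifP => // /negbT Hu; apply/esym/supp0.
apply: contra Hu => Hg; rewrite in_fset /= mem_pmap; apply/mapP; exists (val u) => //.
by rewrite valK.
Qed.

Lemma pi_star_val (f : MA k (Mx op)) u : pi_star f (val u) = f u.
Proof.
rewrite /pi_star ma_mapE -[RHS](sum_pred1' f); apply: eq_bigl => t.
by rewrite val_eqE.
Qed.

Lemma pi_star_nu (f : MA k (Mx op)) m : ~~ is_unitm op m -> pi_star f m = 0.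
Proof.
move=> Hm; rewrite /pi_star ma_mapE big1 // => t /eqP Ht.
by move: Hm; rewrite -Ht (valP t).
Qed.

Lemma pi_i (f : MA k M) m :
  pi_star (i_star op f) m = if is_unitm op m then f m else 0.
Proof.
case: ifP => Hm; last by rewrite pi_star_nu ?Hm.
by rewrite -[m]/(val (exist _ m Hm : Mx op)) pi_star_val i_starE.
Qed.

Lemma i_pi (f : MA k (Mx op)) : i_star op (pi_star f) = f.
Proof. by apply/fsfunP => u; rewrite i_starE pi_star_val. Qed.

Variable d : M -> nat.
Hypothesis dD : forall a b, d (op a b) = (d a + d b)%N.
Hypothesis d0 : forall m, (d m == 0)%N = is_unitm op m.

Definition phid (m : M) : nat * M := (d m, m).
Definition hd (f : MA k M) : MA k (nat * M) := ma_map phid f.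

Lemma phid_inj : injective phid.
Proof. by move=> x y [_ ->]. Qed.

Lemma hdE f n m : hd f (n, m) = if n == d m then f m else 0.
Proof.
rewrite /hd ma_mapE.
case: ifP => Hn.
  rewrite -[RHS](sum_pred1' f); apply: eq_bigl => t; rewrite /phid xpair_eqE.
  by case: (t =P m) => [->|]; rewrite ?andbT ?andbF // eq_sym Hn.
rewrite big1 // => t; rewrite /phid xpair_eqE => /andP[/eqP Ht /eqP Htm].
by move: Hn; rewrite -Htm Ht eqxx.
Qed.

Lemma hd_phid f a : hd f (phid a) = f a.
Proof. by rewrite /phid hdE eqxx. Qed.

Lemma hd_sum (f : MA k M) (F : nat * M -> k) :
  (forall p, hd f p = 0 -> F p = 0) ->
  \sum_(p <- finsupp (hd f)) F p = \sum_(a <- finsupp f) F (phid a).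
Proof.
move=> HF; rewrite (sum_supp (S := [fset phid t | t in finsupp f]%fset)) //.
  by rewrite sum_imfset //; exact: phid_inj.
exact: supp_map.
Qed.

Lemma hd_ev c f m : ma_ev c (hd f) m = f m * c ^+ d m.
Proof.
rewrite ma_evE big_mkcond /= hd_sum; last by move=> p ->; rewrite mul0r if_same.
rewrite -(sum_pred1 f (fun a => c ^+ d a)) [RHS]big_mkcond /=.
by apply: eq_bigr => a _; rewrite hd_phid.
Qed.

Lemma de : d e = 0%N.
Proof. by apply/eqP; rewrite d0 unitm_e. Qed.

Lemma hd_hom : is_kalg_hom op e (A1op op) (0%N, e) hd.
Proof.
split.
- move=> f g; apply/fsfunP => -[n m].
  by rewrite ma_addE !hdE ma_addE; case: ifP; rewrite ?addr0.
- move=> c f; apply/fsfunP => -[n m].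
  by rewrite ma_scaleE !hdE ma_scaleE; case: ifP; rewrite ?mulr0.
- move=> f g; apply/fsfunP => -[n m].
  rewrite ma_mulE hdE ma_mulE hd_sum; last first.
    by move=> p Hp; rewrite big1 // => q _; rewrite Hp mul0r.
  have E : forall a, \sum_(q <- finsupp (hd g) | A1op op (phid a) q == (n, m))
       hd f (phid a) * hd g q =
     \sum_(b <- finsupp g | (op a b == m) && (n == d m)) f a * g b.
    move=> a; rewrite big_mkcond /= hd_sum; last by move=> q ->; rewrite mulr0 if_same.
    rewrite [RHS]big_mkcond /=; apply: eq_bigr => b _.
    rewrite /A1op /phid /= !hd_phid xpair_eqE -dD.
    by case: (op a b =P m) => [->|]; rewrite ?andbF // andbC eq_sym.
  rewrite (eq_bigr _ (fun a _ => E a)).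
  case: ifP => Hn.
    by apply: eq_bigr => a _; apply: eq_bigl => b; rewrite andbT.
  by rewrite big1 // => a _; rewrite big1 // => b; rewrite andbF.
- apply/fsfunP => -[n m].
  rewrite hdE !ma_basisE xpair_eqE.
  case: (m =P e) => [->|]; rewrite ?andbF ?andbT ?de; last by case: ifP.
  by case: (n == 0%N).
Qed.

Lemma htpy : naive_A1_htpy op e (fun f : MA k M => pi_star (i_star op f)) (fun f => f).
Proof.
apply: rst_step; exists hd; split.
- exact: hd_hom.
- move=> f; apply/fsfunP => m; rewrite hd_ev pi_i expr0n -d0.
  by case: (d m == 0)%N; rewrite ?mulr1 ?mulr0.
- by move=> f; apply/fsfunP => m; rewrite hd_ev expr1n mulr1.
Qed.


End FsAlg2.

Section Gordan.
Local Open Scope ring_scope.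
Variable F : realFieldType.

Lemma lowb (B : seq F) : exists t, forall b, b \in B -> t < b.
Proof.
elim: B => [|b B [t Ht]]; first by exists 0.
case: (lerP t b) => Htb.
  exists (t - 1) => x; rewrite inE => /orP[/eqP ->|/Ht]; lra.
exists (b - 1) => x; rewrite inE => /orP[/eqP ->|/Ht]; lra.
Qed.

Lemma interp1 (a : F) (B : seq F) : (forall b, b \in B -> a < b) ->
  exists t, a < t /\ forall b, b \in B -> t < b.
Proof.
elim: B => [|b B IH] H; first by exists (a + 1); split => //; lra.
have [t [Hat Ht]] : exists t, a < t /\ forall b, b \in B -> t < b.
  by apply: IH => x Hx; apply: H; rewrite inE Hx orbT.
have Hab : a < b by apply: H; rewrite inE eqxx.
case: (lerP t b) => Htb.
  exists ((a + t) / 2); split; first lra.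
  move=> x; rewrite inE => /orP[/eqP ->|/Ht]; lra.
exists ((a + b) / 2); split; first lra.
move=> x; rewrite inE => /orP[/eqP ->|/Ht]; lra.
Qed.

Lemma interp (A B : seq F) : (forall a b, a \in A -> b \in B -> a < b) ->
  exists t, (forall a, a \in A -> a < t) /\ (forall b, b \in B -> t < b).
Proof.
elim: A => [|a A IH] H.
  by have [t Ht] := lowb B; exists t; split.
have [t [HA HB]] : exists t, (forall a, a \in A -> a < t) /\ (forall b, b \in B -> t < b).
  by apply: IH => x y Hx Hy; apply: H; rewrite ?inE ?Hx ?orbT.
case: (ltrP a t) => Hat.
  by exists t; split => // x; rewrite inE => /orP[/eqP ->|/HA].
have [t' [Hat' HB']] : exists t', a < t' /\ forall b, b \in B -> t' < b.
  by apply: interp1 => b Hb; apply: H; rewrite ?inE ?eqxx.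
exists t'; split => // x; rewrite inE => /orP[/eqP -> //|/HA]; lra.
Qed.


Lemma le_sum1 (I : finType) (G : I -> F) q : (forall i, 0 <= G i) -> G q <= \sum_i G i.
Proof. by move=> HG; rewrite (bigD1 q) //= lerDl sumr_ge0. Qed.

Lemma gordan (n : nat) : forall (I : finType) (S : pred I) (u : I -> nat -> F),
  (exists x : nat -> F, forall i, S i -> 0 < \sum_(c < n) x c * u i c) \/
  (exists l : I -> F, [/\ forall i, 0 <= l i, forall i, ~~ S i -> l i = 0,
     exists i, 0 < l i & forall c, (c < n)%N -> \sum_i l i * u i c = 0]).
Proof.
elim: n => [|n IH] I S u.
  case: (pickP S) => [i0 Hi0|HS].
    right; exists (fun i => if i == i0 then 1 else 0); split => //.
    - by move=> i; case: ifP.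
    - by move=> i; case: eqP => // -> ; rewrite Hi0.
    - by exists i0; rewrite eqxx.
  by left; exists (fun=> 0) => i; rewrite HS.
pose cc i := u i n.
pose S' (j : I + (I * I)) := match j with
  | inl i => S i && (cc i == 0)
  | inr pq => [&& S pq.1, S pq.2, 0 < cc pq.1 & cc pq.2 < 0] end.
pose u' (j : I + (I * I)) c := match j with
  | inl i => u i c
  | inr pq => cc pq.1 * u pq.2 c - cc pq.2 * u pq.1 c end.
case: (IH _ S' u') => [[x' Hx']|[l' [l'0 l'S [j0 Hj0] l'E]]].
- left.
  pose s i := \sum_(c < n) x' c * u i c.
  have Hs0 : forall i, S i -> cc i = 0 -> 0 < s i.
    by move=> i Si ci; have := Hx' (inl i); rewrite /S' Si ci eqxx; apply.
  have Hpq : forall p q, S p -> S q -> 0 < cc p -> cc q < 0 ->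
      0 < cc p * s q - cc q * s p.
    move=> p q Sp Sq cp cq; have := Hx' (inr (p, q)); rewrite /S' /= Sp Sq cp cq.
    move=> /(_ isT); congr (_ < _); rewrite /s !mulr_sumr -sumrB.
    by apply: eq_bigr => c _; rewrite /=; ring.
  pose A := map (fun p => - s p / cc p) (filter (fun p => S p && (0 < cc p)) (enum I)).
  pose B := map (fun q => s q / - cc q) (filter (fun q => S q && (cc q < 0)) (enum I)).
  have [t [HA HB]] : exists t, (forall a, a \in A -> a < t) /\ (forall b, b \in B -> t < b).
    apply: interp => a b /mapP[p + ->] /mapP[q + ->].
    rewrite !mem_filter => /andP[/andP[Sp cp] _] /andP[/andP[Sq cq] _].
    have := Hpq p q Sp Sq cp cq.
    set al := - s p / cc p; set be := s q / - cc q.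
    have Ep : s p = - al * cc p by rewrite /al mulNr mulfVK ?opprK // gt_eqF.
    have Eq : s q = be * - cc q by rewrite /be mulfVK // oppr_eq0 lt_eqF.
    rewrite Ep Eq => H.
    have : 0 < cc p * cc q * (al - be) by move: H; congr (_ < _); ring.
    rewrite nmulr_rgt0 ?subr_lt0 //; by rewrite pmulr_rlt0.
  exists (fun c => if c == n then t else x' c) => i Si.
  rewrite big_ord_recr /= eqxx.
  rewrite (eq_bigr (fun c : 'I_n => x' c * u i c)); last first.
    by move=> c _; rewrite /= ltn_eqF.
  rewrite -/(s i) -/(cc i).
  case: (ltrgt0P (cc i)) => ci.
  + have : - s i / cc i < t by apply: HA; apply/mapP; exists i => //; rewrite mem_filter Si ci mem_enum.
    rewrite ltr_pdivrMr // => H; lra.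
  + have : t < s i / - cc i.
      by apply: HB; apply/mapP; exists i => //; rewrite mem_filter Si ci mem_enum.
    rewrite ltr_pdivlMr ?oppr_gt0 // => H; lra.
  + by rewrite ci mulr0 addr0; apply: Hs0.
- right.
  have l'S' : forall j, l' j != 0 -> S' j.
    by move=> j; apply: contraR => /l'S ->.
  have Hpq : forall p q, l' (inr (p, q)) != 0 -> [/\ S p, S q, 0 < cc p & cc q < 0].
    by move=> p q /l'S' /and4P.
  have P1 : forall p q, 0 <= l' (inr (p, q)) * - cc q.
    move=> p q; case: (l' (inr (p, q)) =P 0) => [->|/eqP H]; first by rewrite mul0r.
    by case: (Hpq _ _ H) => _ _ _ cq; rewrite mulr_ge0 // oppr_ge0 ltW.
  have P2 : forall p q, 0 <= l' (inr (p, q)) * cc p.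
    move=> p q; case: (l' (inr (p, q)) =P 0) => [->|/eqP H]; first by rewrite mul0r.
    by case: (Hpq _ _ H) => _ _ cp _; rewrite mulr_ge0 // ltW.
  pose l i := l' (inl i) + \sum_q l' (inr (i, q)) * - cc q + \sum_p l' (inr (p, i)) * cc p.
  exists l; split.
  + by move=> i; rewrite /l !addr_ge0 // sumr_ge0.
  + move=> i Si; rewrite /l.
    rewrite l'S ?big1 ?addr0 //= ?(negbTE Si) //.
    * move=> p _; case: (l' (inr (p, i)) =P 0) => [->|/eqP H]; first by rewrite mul0r.
      by case: (Hpq _ _ H) => _ Si'; rewrite Si' in Si.
    * move=> q _; case: (l' (inr (i, q)) =P 0) => [->|/eqP H]; first by rewrite mul0r.
      by case: (Hpq _ _ H) => Si'; rewrite Si' in Si.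
  + case: j0 Hj0 => [i|[p q]] Hj0.
      exists i; rewrite /l -addrA; apply: (lt_le_trans Hj0); rewrite lerDl addr_ge0 //.
      by rewrite sumr_ge0. by rewrite sumr_ge0.
    exists p; rewrite /l; apply: (@lt_le_trans _ _ (l' (inr (p, q)) * - cc q)).
      have H : l' (inr (p, q)) != 0 by rewrite gt_eqF.
      by case: (Hpq _ _ H) => _ _ _ cq; rewrite mulr_gt0 // oppr_gt0.
    apply: le_trans (@le_sum1 _ _ q (P1 p)) _.
    rewrite -addrA addrCA lerDl addr_ge0 ?l'0 //.
    by rewrite sumr_ge0.
  + move=> c; rewrite ltnS leq_eqVlt => /orP[/eqP ->|Hc].
    * rewrite /l.
      rewrite (eq_bigr (fun i => l' (inl i) * cc i + (\sum_q l' (inr (i, q)) * - cc q * cc i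
                 + \sum_p l' (inr (p, i)) * cc p * cc i))); last first.
        by move=> i _; rewrite -!addrA mulrDl mulrDl !mulr_suml.
      rewrite big_split /= big1 ?add0r; last first.
        move=> i _; case: (l' (inl i) =P 0) => [->|/eqP H]; first by rewrite mul0r.
        by move: (l'S' _ H) => /= /andP[_ /eqP ->]; rewrite mulr0.
      rewrite big_split /= [X in _ + X]exchange_big /= -big_split /=.
      by rewrite big1 // => i _; rewrite -big_split big1 // => q _ /=; ring.
    * apply: (etrans _ (l'E c Hc)); rewrite big_sumType /=.
      have -> : \sum_(pq : I * I) l' (inr pq) * u' (inr pq) c =
          \sum_p \sum_q l' (inr (p, q)) * u' (inr (p, q)) c.
        by rewrite pair_big /=; apply: eq_bigr => -[].
      have -> : \sum_i l i * u i c = \sum_i (l' (inl i) * u i c + (\sum_q l' (inr (i, q)) * - cc q * u i c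
                 + \sum_p l' (inr (p, i)) * cc p * u i c)).
        by apply: eq_bigr => i _; rewrite /l -!addrA mulrDl mulrDl !mulr_suml.
      rewrite big_split /=; congr (_ + _).
      rewrite big_split /= [X in _ + X]exchange_big /= -big_split /=.
      by apply: eq_bigr => i _; rewrite -big_split; apply: eq_bigr => q _ /=; ring.
Qed.

End Gordan.

Section Mon.
Variables (M : choiceType) (e : M) (op : Monoid.com_law e).

Definition pw (x : M) (n : nat) : M := iter n (op x) e.

Lemma pwD x m n : pw x (m + n) = op (pw x m) (pw x n).
Proof.
elim: m => [|m IH]; first by rewrite add0n /pw /= Monoid.mul1m.
by rewrite addSn /pw /= -/(pw x (m + n)) IH Monoid.mulmA.
Qed.

Lemma pw1 x : pw x 1 = x.
Proof. by rewrite /pw /= Monoid.mulm1. Qed.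

Lemma unit_opl x y : is_unitm op (op x y) -> is_unitm op x.
Proof.
move/asboolP => [z Hz]; apply/asboolP; exists (op y z).
by rewrite Monoid.mulmA.
Qed.

Lemma unit_opr x y : is_unitm op (op x y) -> is_unitm op y.
Proof. by rewrite Monoid.mulmC; apply: unit_opl. Qed.

Lemma unit_op x y : is_unitm op x -> is_unitm op y -> is_unitm op (op x y).
Proof.
move/asboolP => [x' Hx] /asboolP [y' Hy]; apply/asboolP; exists (op x' y').
have -> : op (op x y) (op x' y') = op (op x x') (op y y') by rewrite Monoid.mulmACA.
by rewrite Hx Hy Monoid.mul1m.
Qed.

Lemma unit_e : is_unitm op e.
Proof. by apply/asboolP; exists e; rewrite Monoid.mul1m. Qed.

Lemma unit_pw x n : is_unitm op x -> is_unitm op (pw x n).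
Proof.
move=> Hx; elim: n => [|n IH]; first exact: unit_e.
by rewrite /pw /=; apply: unit_op.
Qed.

Lemma pw_unit x n : (0 < n)%N -> is_unitm op (pw x n) -> is_unitm op x.
Proof. by case: n => // n _; rewrite /pw /= => /unit_opl. Qed.

Variable r : nat.
Variable g : 'I_r -> M.

Definition gprod (a : 'I_r -> nat) : M := \big[op/e]_j pw (g j) (a j).

Lemma gprod_ext a b : (forall j, a j = b j) -> gprod a = gprod b.
Proof. by move=> H; apply: eq_bigr => j _; rewrite H. Qed.

Lemma gprodD a b : gprod (fun j => a j + b j)%N = op (gprod a) (gprod b).
Proof. by rewrite /gprod -big_split; apply: eq_bigr => j _; rewrite pwD. Qed.

Lemma gprod0 : gprod (fun=> 0%N) = e.
Proof. by rewrite /gprod big1. Qed.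

Lemma gprod_delta j0 : gprod (fun j => nat_of_bool (j == j0)) = g j0.
Proof.
rewrite /gprod (bigD1 j0) //= eqxx pw1 big1 ?Monoid.mulm1 // => j /negbTE ->.
by [].
Qed.

Definition nu j := ~~ is_unitm op (g j).

Lemma gprod_unit a j : is_unitm op (gprod a) -> (0 < a j)%N -> ~~ nu j.
Proof.
rewrite /gprod (bigD1 j) //= => /unit_opl Hu Ha; rewrite /nu negbK.
exact: pw_unit Hu.
Qed.

Lemma gprod_unit_conv a : (forall j, nu j -> a j = 0%N) -> is_unitm op (gprod a).
Proof.
move=> H; rewrite /gprod; apply: (big_ind (is_unitm op)).
- exact: unit_e.
- exact: unit_op.
move=> j _; case: (boolP (nu j)) => Hj; first by rewrite H // unit_e.
by apply: unit_pw; move: Hj; rewrite /nu negbK.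
Qed.

Hypothesis canc : cancellative op.

Lemma keyK a b : gprod a = gprod b -> (forall j, nu j -> (b j <= a j)%N) ->
  forall j, nu j -> a j = b j.
Proof.
move=> Hab Hle.
pose aU j := if nu j then 0%N else a j.
pose bU j := if nu j then 0%N else b j.
pose bS j := if nu j then b j else 0%N.
pose c j := if nu j then (a j - b j)%N else 0%N.
have Ea : gprod a = op (gprod aU) (op (gprod bS) (gprod c)).
  rewrite -!gprodD; apply: gprod_ext => j; rewrite /aU /bS /c.
  by case: ifP => // Hj; [move: (Hle j Hj); lia | lia].
have Eb : gprod b = op (gprod bU) (gprod bS).
  rewrite -!gprodD; apply: gprod_ext => j; rewrite /bU /bS.
  by case: ifP => //; rewrite addn0.
have H1 : op (gprod aU) (gprod c) = gprod bU.
  apply: (canc (c := gprod bS)); rewrite -Eb -Hab Ea -Monoid.mulmA; congr (op _ _); exact: Monoid.mulmC.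
have Hc : is_unitm op (gprod c).
  apply: (unit_opr (x := gprod aU)); rewrite H1; apply: gprod_unit_conv.
  by move=> j Hj; rewrite /bU Hj.
move=> j Hj; apply/eqP; rewrite eqn_leq Hle // andbT.
case: (ltnP (b j) (a j)) => // Hlt.
have := gprod_unit Hc (j := j); rewrite /c Hj subn_gt0 Hlt => /(_ isT).
by [].
Qed.

End Mon.

Section Rat.
Local Open Scope ring_scope.

Lemma denq_mul (q : rat) : `|denq q|%:R * q = (numq q)%:~R.
Proof.
rewrite numqE mulrC; congr (_ * _).
by have := denq_gt0 q; case: (denq q) => [n|n].
Qed.

Lemma natw_seq (s : seq rat) : (forall x, x \in s -> 0 <= x) ->
  exists K : nat, (0 < K)%N /\ forall x, x \in s -> exists n : nat, K%:R * x = n%:R.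
Proof.
elim: s => [|x s IH] H; first by exists 1%N.
have [K [HK HKs]] : exists K : nat, (0 < K)%N /\ forall x, x \in s -> exists n : nat, K%:R * x = n%:R.
  by apply: IH => y Hy; apply: H; rewrite inE Hy orbT.
have Hx : 0 <= x by apply: H; rewrite inE eqxx.
exists (K * `|denq x|)%N; split.
  by rewrite muln_gt0 HK absz_gt0 gt_eqF // denq_gt0.
move=> y; rewrite inE => /orP[/eqP ->|Hy].
  rewrite natrM -mulrA denq_mul.
  move: Hx; rewrite -numq_ge0; case: (numq x) => [n|n] // _.
  by exists (K * n)%N; rewrite natrM.
have [n Hn] := HKs y Hy; exists (`|denq x| * n)%N.
by rewrite natrM [K%:R * _]mulrC -mulrA Hn natrM.
Qed.

Lemma natw r (W : 'I_r -> rat) : (forall j, 0 <= W j) ->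
  exists K : nat, (0 < K)%N /\ exists Wn : 'I_r -> nat, forall j, (Wn j)%:R = K%:R * W j.
Proof.
move=> HW; case: (natw_seq (s := [seq W j | j <- enum 'I_r])) => [x /mapP[j _ ->] //|K [HK HKs]].
exists K; split => //.
have : forall j, exists n : nat, (n%:R = K%:R * W j).
  move=> j; have [n Hn] := HKs (W j) (map_f _ (mem_enum _ j)); by exists n.
by case/fin_all_exists => Wn HWn; exists Wn.
Qed.

End Rat.

Section Lin.
Local Open Scope ring_scope.
Variables (M : choiceType) (e : M) (op : Monoid.com_law e).
Variable r : nat.
Variable g : 'I_r -> M.
Hypothesis canc : cancellative op.

Local Notation gprod := (gprod op g).
Local Notation nu := (nu op g).

Definition Lp (v : 'rV[rat]_r) := exists a b, gprod a = gprod b /\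
  forall j, v 0 j = if nu j then (a j)%:R - (b j)%:R else 0.

Definition Lq (v : 'rV[rat]_r) := exists N : nat, (0 < N)%N /\ Lp (N%:R *: v).

Lemma Lp0 : Lp 0.
Proof. by exists (fun=> 0%N), (fun=> 0%N); split => // j; rewrite mxE subrr if_same. Qed.

Lemma LpD v w : Lp v -> Lp w -> Lp (v + w).
Proof.
move=> [a1 [b1 [E1 H1]]] [a2 [b2 [E2 H2]]].
exists (fun j => a1 j + a2 j)%N, (fun j => b1 j + b2 j)%N; split.
  by rewrite !gprodD E1 E2.
move=> j; rewrite mxE H1 H2; case: ifP => _; rewrite ?addr0 // !natrD; ring.
Qed.

Lemma LpN v : Lp v -> Lp (- v).
Proof.
move=> [a [b [E H]]]; exists b, a; split => // j.
by rewrite mxE H; case: ifP => _; rewrite ?oppr0 // opprB.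
Qed.

Lemma LpMn v n : Lp v -> Lp (v *+ n).
Proof.
move=> H; elim: n => [|n IH]; first by rewrite mulr0n; exact: Lp0.
by rewrite mulrS; apply: LpD.
Qed.

Lemma LpZ v (z : int) : Lp v -> Lp (z%:~R *: v).
Proof.
move=> H; rewrite scaler_int; case: z => n.
  by apply: LpMn.
by rewrite NegzE mulrNz; apply/LpN/LpMn.
Qed.

Lemma Lq0 : Lq 0.
Proof. by exists 1%N; split => //; rewrite scaler0; exact: Lp0. Qed.

Lemma LqD v w : Lq v -> Lq w -> Lq (v + w).
Proof.
move=> [N1 [HN1 H1]] [N2 [HN2 H2]]; exists (N1 * N2)%N; split; first by rewrite muln_gt0 HN1.
rewrite scalerDr natrM; apply: LpD; first rewrite mulrC.
  by rewrite -scalerA scaler_nat; apply: LpMn.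
by rewrite -scalerA scaler_nat; apply: LpMn.
Qed.

Lemma LqZ v (q : rat) : Lq v -> Lq (q *: v).
Proof.
move=> [N [HN H]]; exists (N * `|denq q|)%N; split.
  by rewrite muln_gt0 HN absz_gt0 gt_eqF // denq_gt0.
rewrite scalerA natrM mulrAC -mulrA.
rewrite [q * _]mulrC.
have -> : `|denq q|%:R * q = (numq q)%:~R :> rat.
  rewrite numqE mulrC; congr (_ * _).
  by have := denq_gt0 q; case: (denq q) => [n|n].
by rewrite mulrC -scalerA; apply: LpZ.
Qed.

Lemma LpLq v : Lp v -> Lq v.
Proof. by move=> H; exists 1%N; rewrite scale1r. Qed.

Lemma sub_Lq m (A : 'M[rat]_(m, r)) v : (forall i, Lq (row i A)) -> (v <= A)%MS -> Lq v.
Proof.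
move=> HA /submxP [D ->]; rewrite mulmx_sum_row.
apply: (big_ind Lq); [exact: Lq0 | exact: LqD | move=> i _; exact: LqZ].
Qed.


Lemma maxrank : exists m (A : 'M[rat]_(m, r)),
  (forall i, Lq (row i A)) /\ forall v, Lp v -> (v <= A)%MS.
Proof.
pose P k := `[< exists m (A : 'M[rat]_(m, r)), (forall i, Lq (row i A)) /\ \rank A = k >].
have exP : exists k, P k.
  exists 0%N; apply/asboolP; exists 0%N, 0; split; first by case.
  exact: mxrank0.
have Pb : forall k, P k -> (k <= r)%N.
  by move=> k /asboolP [m [A [_ <-]]]; exact: rank_leq_col.
case: (ex_maxnP exP Pb) => k /asboolP [m [A [HA Hr]]] Hmax.
exists m, A; split => // v Hv.
apply/negPn/negP => Hn.
have HP : P (\rank (col_mx A v)).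
  apply/asboolP; exists (m + 1)%N, (col_mx A v); split => // i.
  case: (split_ordP i) => i' ->; first by rewrite rowKu.
  rewrite rowKd.
  have -> : row i' v = v by apply/rowP => j; rewrite !mxE (ord1 i').
  exact: LpLq.
have := Hmax _ HP; rewrite -Hr leqNgt => /negP; apply.
apply: rank_ltmx; rewrite ltmxE.
have := submx_refl (col_mx A v); rewrite col_mx_sub => /andP[-> _] /=.
by rewrite col_mx_sub submx_refl.
Qed.

Lemma weights : exists Wn : 'I_r -> nat, (forall j, (0 < Wn j)%N = nu j) /\
  forall a b, gprod a = gprod b -> (\sum_j Wn j * a j = \sum_j Wn j * b j)%N.
Proof.
have [m [A [HA HL]]] := maxrank.
pose P := cokermx A.
case: (gordan (F := rat) r nu (fun i c => P i (insubd i c))) =>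
   [[x Hx] | [l [l0 lS [i0 Hi0] lE]]]; last first.
  exfalso.
  pose lam := \row_j l j : 'rV[rat]_r.
  have Hlam : (lam <= A)%MS.
    rewrite submxE; apply/eqP/rowP => c; rewrite !mxE; apply: etrans (lE c (ltn_ord c)) .
    by apply: eq_bigr => i _; rewrite !mxE valKd.
  have [N [HN [a [b [Eab Hab]]]]] := sub_Lq HA Hlam.
  have Hle : forall j, nu j -> (b j <= a j)%N.
    move=> j Hj; have := Hab j; rewrite !mxE Hj => E.
    by rewrite -(ler_nat rat) -subr_ge0 -E mulr_ge0 // ?ler0n.
  have K := keyK canc Eab Hle.
  have : l i0 = 0.
    case: (boolP (nu i0)) => Hi; last by apply: lS.
    have := Hab i0; rewrite !mxE Hi (K i0 Hi) subrr => /eqP.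
    by rewrite mulf_eq0 pnatr_eq0 eqn0Ngt HN /= => /eqP.
  by move=> E; move: Hi0; rewrite E ltxx.
pose w j := if nu j then \sum_(c < r) x c * P j c else 0.
have Hw : forall j, nu j -> 0 < w j.
  move=> j Hj; rewrite /w Hj; have := Hx j Hj.
  by congr (_ < _); apply: eq_bigr => c _; rewrite valKd.
have Hw0 : forall j, 0 <= w j.
  by move=> j; case: (boolP (nu j)) => Hj; [apply/ltW/Hw | rewrite /w (negbTE Hj)].
have Horth : forall a b, gprod a = gprod b ->
    \sum_j w j * ((a j)%:R - (b j)%:R) = 0.
  move=> a b Eab.
  pose v := \row_j (if nu j then (a j)%:R - (b j)%:R else 0) : 'rV[rat]_r.
  have Hv : Lp v by exists a, b; split => // j; rewrite mxE.
  have /eqP HvP : v *m P == 0 by rewrite -submxE; apply: HL.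
  transitivity (\sum_j v 0 j * \sum_(c < r) x c * P j c).
    apply: eq_bigr => j _; rewrite mxE /w.
    by case: ifP => _; rewrite ?mul0r ?mulr0 // mulrC.
  under eq_bigr do rewrite mulr_sumr.
  rewrite exchange_big /=.
  rewrite big1 // => c _.
  have : (v *m P) 0 c = 0 by rewrite HvP mxE.
  rewrite mxE => E.
  under eq_bigr do rewrite mulrCA.
  by rewrite -mulr_sumr E mulr0.
have [K [HK [Wn HWn]]] := natw Hw0.
exists Wn; split.
  move=> j; rewrite -(ltr0n rat) HWn.
  case: (boolP (nu j)) => Hj; first by rewrite mulr_gt0 ?ltr0n // Hw.
  by rewrite /w (negbTE Hj) mulr0 ltxx.
move=> a b Eab; apply/eqP; rewrite -(eqr_nat rat) !natr_sum -subr_eq0 -sumrB.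
apply/eqP; transitivity (K%:R * \sum_j w j * ((a j)%:R - (b j)%:R)).
  rewrite mulr_sumr; apply: eq_bigr => j _; rewrite !natrM HWn; ring.
by rewrite Horth // mulr0.
Qed.

End Lin.

Lemma grading (M : choiceType) (e : M) (op : Monoid.com_law e) :
  cancellative op -> fin_generated e op ->
  exists d : M -> nat, (forall a b, d (op a b) = d a + d b)%N /\
    forall m, (d m == 0)%N = is_unitm op m.
Proof.
move=> canc [s gen].
pose r := size s.
pose g (j : 'I_r) := nth e s j.
have expo : forall m, exists a, m = gprod op g a.
  move=> m; have [n [Hn ->]] := gen m; clear m.
  elim: n Hn => [|x n IH] Hn.
    by exists (fun=> 0%N); rewrite big_nil gprod0.
  have [a Ha] : exists a, \big[op/e]_(y <- n) y = gprod op g a.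
    by apply: IH => y Hy; apply: Hn; rewrite inE Hy orbT.
  have Hx : (index x s < r)%N by rewrite index_mem; apply: Hn; rewrite inE eqxx.
  pose j0 := Ordinal Hx.
  exists (fun j => a j + nat_of_bool (j == j0))%N.
  rewrite gprodD gprod_delta -Ha big_cons Monoid.mulmC; congr (op _ _).
  by rewrite /g /= nth_index //; apply: Hn; rewrite inE eqxx.
have [Wn [HW Hwd]] := weights g canc.
pose exv m := proj1_sig (cid (expo m)).
have exE : forall m, m = gprod op g (exv m) by move=> m; rewrite /exv; case: cid.
exists (fun m => \sum_j Wn j * exv m j)%N; split.
  move=> a b; rewrite -big_split /=.
  have -> : (\sum_j Wn j * exv (op a b) j = \sum_j Wn j * (exv a j + exv b j))%N.
    by apply: Hwd; rewrite gprodD -!exE.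
  by apply: eq_bigr => j _; rewrite mulnDr.
move=> m; rewrite sum_nat_eq0; apply/forallP/idP.
  move=> H; rewrite [m]exE; apply: gprod_unit_conv => j Hj.
  have := H j; rewrite /= muln_eq0 => /orP[|/eqP //].
  by rewrite -leqn0 leqNgt HW Hj.
move=> Hu j /=; rewrite muln_eq0; apply/orP; case: (posnP (exv m j)) => [H0|Hp].
  by right; apply/eqP.
left; apply/eqP.
rewrite [m]exE in Hu; have := gprod_unit Hu Hp.
by rewrite -HW lt0n negbK => /eqP.
Qed.

Theorem lemma1p5 (k : fieldType) (M : choiceType) (e : M) (op : Monoid.com_law e) :
  cancellative op -> fin_generated e op -> gp_torsion_free e op ->
  (* pi o i = id_Y, i.e. i^* o pi^* = id on k[M^x] *)
  (forall f : MA k (Mx op), i_star op (pi_star f) = f) /\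
  (* i o pi naively A^1-homotopic to id_X, i.e. pi^* o i^* ~ id on k[M] *)
  naive_A1_htpy op e (fun f : MA k M => pi_star (i_star op f)) (fun f => f).
Proof.
move=> canc fg _; split; first exact: i_pi.
have [d [dD d0]] := grading canc fg.
exact: htpy dD d0.
Qed.
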